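(* Let $b(\lambda)=\frac14\lambda^4+\frac12p\lambda^2+q\lambda$ with $p<0$, $q\in\mathbb{R}$. For $\eta\ne q$ let $\lambda(\eta)$ be the unique point at which $\lambda\mapsto\eta\lambda-b(\lambda)$ attains its global maximum, and let $\lambda(q)=\sqrt{-p}$ (so that $|\lambda(\eta)|\ge\sqrt{-p}$ for all $\eta$). Fix $x$ with $|x|>\sqrt{-p}$. Then for all $\eta\in\mathbb{R}$: (a) $x^2+x\lambda(\eta)+\lambda(\eta)^2+p\ge -2p$ if $|x|\ge2\sqrt{-p}$, and $\ge|x|(|x|-\sqrt{-p})$ if $\sqrt{-p}<|x|<2\sqrt{-p}$; (b) $x^2+2x\lambda(\eta)+3\lambda(\eta)^2+2p\ge-4p$ if $|x|\ge3\sqrt{-p}$, and $\ge(|x|-\sqrt{-p})^2$ if $\sqrt{-p}<|x|<3\sqrt{-p}$. In particular both expressions are bounded below by a positive constant independent of $\eta$. *)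

(* Defs.v *)
From Stdlib Require Import Reals Lra.
Open Scope R_scope.

Definition b (p q lam : R) : R := / 4 * lam ^ 4 + / 2 * p * lam ^ 2 + q * lam.

Definition unique_global_argmax (f : R -> R) (l : R) : Prop :=
  (forall mu, f mu <= f l) /\ (forall m, (forall mu, f mu <= f m) -> m = l).

(* Main.v *)
Require Import Defs.
From Stdlib Require Import Reals Lra Psatz.
Open Scope R_scope.
Lemma hA1 a s L : 0 < s -> 2*s <= a -> (s <= L \/ L <= -s) ->
  a^2 + a*L + L^2 - s^2 >= 2*s^2.
Proof. intros. assert (0 <= (2*L+a)^2) by apply pow2_ge_0. assert (4*s^2 <= a^2) by nra. nra. Qed.
Lemma hA2 a s L : 0 < s -> s < a -> a < 2*s -> (s <= L \/ L <= -s) ->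
  a^2 + a*L + L^2 - s^2 >= a*(a-s).
Proof. intros Hs H1 H2 [H|H]. nra. assert (0 <= (L+s)*(L-s+a)) by nra. nra. Qed.
Lemma hB1 a s L : 0 < s -> 3*s <= a -> (s <= L \/ L <= -s) ->
  a^2 + 2*a*L + 3*L^2 - 2*s^2 >= 4*s^2.
Proof. intros. assert (0 <= (3*L+a)^2) by apply pow2_ge_0. assert (9*s^2 <= a^2) by nra. nra. Qed.
Lemma hB2 a s L : 0 < s -> s < a -> a < 3*s -> (s <= L \/ L <= -s) ->
  a^2 + 2*a*L + 3*L^2 - 2*s^2 >= (a-s)^2.
Proof. intros Hs H1 H2 [H|H]. nra. assert (0 <= (L+s)*(3*L-3*s+2*a)) by nra. nra. Qed.
Lemma lamb p q eta l : p < 0 -> eta <> q ->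
  (forall mu, eta * mu - b p q mu <= eta * l - b p q l) ->
  sqrt (-p) <= l \/ l <= - sqrt (-p).
Proof.
  intros hp hne H.
  set (s := sqrt (-p)).
  assert (hs : 0 < s) by (apply sqrt_lt_R0; lra).
  assert (hs2 : s*s = -p) by (apply sqrt_sqrt; lra).
  pose proof (H (-l)) as H1. pose proof (H s) as H2. pose proof (H (-s)) as H3.
  unfold b in H1, H2, H3.
  set (c := eta - q).
  assert (Hc1 : 0 <= c*l) by (unfold c; nra).
  assert (E2 : c*(s-l) <= - (s*s-l*l)^2/4) by (unfold c; nra).
  assert (E3 : c*(s+l) >= (s*s-l*l)^2/4) by (unfold c; nra).
  assert (0 <= (s*s-l*l)^2) by apply pow2_ge_0.
  destruct (Rlt_or_le 0 c).
  - left. nra.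
  - assert (c < 0) by (unfold c in *; destruct (Req_dec eta q); [contradiction|lra]).
    right. nra.
Qed.

Theorem proposition6p1 (p q x : R) (lam : R -> R)
  (hp : p < 0)
  (hlam : forall eta, eta <> q ->
            unique_global_argmax (fun l => eta * l - b p q l) (lam eta))
  (hlamq : lam q = sqrt (- p))
  (hx : sqrt (- p) < Rabs x) :
  (forall eta : R,
     (2 * sqrt (- p) <= Rabs x ->
        x ^ 2 + x * lam eta + lam eta ^ 2 + p >= - 2 * p) /\
     (Rabs x < 2 * sqrt (- p) ->
        x ^ 2 + x * lam eta + lam eta ^ 2 + p >= Rabs x * (Rabs x - sqrt (- p))) /\
     (3 * sqrt (- p) <= Rabs x ->
        x ^ 2 + 2 * x * lam eta + 3 * lam eta ^ 2 + 2 * p >= - 4 * p) /\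
     (Rabs x < 3 * sqrt (- p) ->
        x ^ 2 + 2 * x * lam eta + 3 * lam eta ^ 2 + 2 * p >= (Rabs x - sqrt (- p)) ^ 2))
  /\
  (exists c : R, c > 0 /\
     forall eta : R,
       x ^ 2 + x * lam eta + lam eta ^ 2 + p >= c /\
       x ^ 2 + 2 * x * lam eta + 3 * lam eta ^ 2 + 2 * p >= c).
Proof.
  set (s := sqrt (-p)) in *.
  assert (hs : 0 < s) by (apply sqrt_lt_R0; lra).
  assert (hs2 : s*s = -p) by (apply sqrt_sqrt; lra).
  assert (HL : forall eta, s <= lam eta \/ lam eta <= - s).
  { intro eta. destruct (Req_dec eta q) as [->|hne].
    - left. lra.
    - apply (lamb p q eta); auto. apply (proj1 (hlam eta hne)). }
  assert (hp' : p = - s^2) by nra.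
  assert (Key : forall eta, let a := Rabs x in let L := lam eta in
     x ^ 2 + x * L + L ^ 2 + p = a^2 + a*(if Rle_dec 0 x then L else -L) + (if Rle_dec 0 x then L else -L)^2 - s^2 /\
     x ^ 2 + 2 * x * L + 3 * L ^ 2 + 2 * p = a^2 + 2*a*(if Rle_dec 0 x then L else -L) + 3*(if Rle_dec 0 x then L else -L)^2 - 2*s^2 /\
     (s <= (if Rle_dec 0 x then L else -L) \/ (if Rle_dec 0 x then L else -L) <= -s)).
  { intros eta a L. unfold a, L. destruct (Rle_dec 0 x).
    - rewrite Rabs_right by lra. split; [|split]; [nra|nra|apply HL].
    - rewrite Rabs_left by lra. split; [|split]; [nra|nra|]. destruct (HL eta); [right|left]; lra. }
  assert (P : forall eta,
     (2 * s <= Rabs x -> x ^ 2 + x * lam eta + lam eta ^ 2 + p >= - 2 * p) /\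
     (Rabs x < 2 * s -> x ^ 2 + x * lam eta + lam eta ^ 2 + p >= Rabs x * (Rabs x - s)) /\
     (3 * s <= Rabs x -> x ^ 2 + 2 * x * lam eta + 3 * lam eta ^ 2 + 2 * p >= - 4 * p) /\
     (Rabs x < 3 * s -> x ^ 2 + 2 * x * lam eta + 3 * lam eta ^ 2 + 2 * p >= (Rabs x - s) ^ 2)).
  { intro eta. destruct (Key eta) as [E1 [E2 E3]].
    set (M := if Rle_dec 0 x then lam eta else - lam eta) in *.
    rewrite E1, E2.
    split; [|split; [|split]]; intro Hh.
    - pose proof (hA1 (Rabs x) s M hs Hh E3). nra.
    - exact (hA2 (Rabs x) s M hs hx Hh E3).
    - pose proof (hB1 (Rabs x) s M hs Hh E3). nra.
    - exact (hB2 (Rabs x) s M hs hx Hh E3). }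
  split; [exact P|].
  exists (Rmin (-2*p) ((Rabs x - s)^2)).
  assert (0 < (Rabs x - s)^2) by (apply pow_lt; lra).
  split.
  - apply Rmin_glb_lt; lra.
  - intro eta. destruct (P eta) as [A1 [A2 [B1 B2]]].
    pose proof (Rmin_l (-2*p) ((Rabs x - s)^2)).
    pose proof (Rmin_r (-2*p) ((Rabs x - s)^2)).
    split.
    + destruct (Rle_or_lt (2*s) (Rabs x)).
      * specialize (A1 H2). lra.
      * specialize (A2 H2). assert (Rabs x * (Rabs x - s) >= (Rabs x - s)^2) by nra. lra.
    + destruct (Rle_or_lt (3*s) (Rabs x)).
      * specialize (B1 H2). lra.
      * specialize (B2 H2). lra.
Qed.
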